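(* Let $G=(V,E)$ be a finite, simple, undirected, connected graph, let $S\subseteq V$ be nonempty and let $\ell\geq 2$ be an integer. If $S$ is an $\{\ell\}$-resolving set of $G$, then for every vertex $x\in V$ and every nonempty set $Y\subseteq V$ with $x\notin Y$ and $|Y|\leq \ell-1$ there exists $s\in S$ such that $d(s,x)<d(s,Y)$.
   Context: $d(u,v)$ denotes the shortest-path distance in $G$, and for a nonempty $X\subseteq V$, $d(s,X)=\min_{x\in X} d(s,x)$. For $S=\{s_1,\dots,s_k\}\subseteq V$ and nonempty $X\subseteq V$, $\mathcal{D}_S(X)=(d(s_1,X),\dots,d(s_k,X))$. A set $S\subseteq V$ is an $\{\ell\}$-resolving set of $G$ if for all distinct nonempty sets $X,Y\subseteq V$ with $|X|\leq\ell$ and $|Y|\leq \ell$ we have $\mathcal{D}_S(X)\neq\mathcal{D}_S(Y)$. *)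

(* Defs.v *)
From mathcomp Require Import all_boot all_order.
Set Implicit Arguments. Unset Strict Implicit. Unset Printing Implicit Defensive.

Definition simple_graph (T : finType) (e : rel T) : Prop :=
  symmetric e /\ irreflexive e.

Definition connected_graph (T : finType) (e : rel T) : Prop :=
  forall u v : T, connect e u v.

Definition walk_len (T : finType) (e : rel T) (u v : T) (n : nat) : bool :=
  [exists p : n.-tuple T, path e u p && (last u p == v)].

(* shortest-path distance: least n with a walk of length n from u to v.
   In a connected graph such n exists and is < #|T|, so searching 0..#|T|-1 is exact. *)
Definition dist (T : finType) (e : rel T) (u v : T) : nat :=
  find (walk_len e u v) (iota 0 #|T|).

Definition dist_set (T : finType) (e : rel T) (s : T) (X : {set T}) : nat :=
  \big[minn/#|T|]_(x in X) dist e s x.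

(* D_S(X) as the function s |-> d(s,X) on S *)
Definition resolving_ell (T : finType) (e : rel T) (S : {set T}) (l : nat) : Prop :=
  forall X Y : {set T}, X != set0 -> Y != set0 -> #|X| <= l -> #|Y| <= l -> X != Y ->
    exists2 s, s \in S & dist_set e s X != dist_set e s Y.

(* Main.v *)
Require Import Defs.
From mathcomp Require Import all_boot all_order.
From mathcomp Require Import zify.

Lemma le_bigmin_seq (I : eqType) (s : seq I) (F : I -> nat) n m :
  (m <= \big[minn/n]_(i <- s) F i) = (m <= n) && all (fun i => m <= F i) s.
Proof.
elim: s => [|a s IH]; first by rewrite big_nil andbT.
by rewrite big_cons leq_min IH /= andbCA.
Qed.

Lemma le_bigmin (T : finType) (A : {set T}) (F : T -> nat) n m :
  (m <= \big[minn/n]_(i in A) F i) = (m <= n) && [forall i in A, m <= F i].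
Proof.
rewrite -big_filter le_bigmin_seq; congr (_ && _).
apply/allP/forall_inP => H i Hi.
  by apply: H; rewrite mem_filter Hi mem_index_enum.
by apply: H; rewrite mem_filter in Hi; case/andP: Hi.
Qed.

Theorem mainTheorem2 (T : finType) (e : rel T) (S : {set T}) (l : nat) :
  simple_graph e -> connected_graph e -> S != set0 -> 2 <= l ->
  resolving_ell e S l ->
  forall (x : T) (Y : {set T}), Y != set0 -> x \notin Y -> #|Y| <= l - 1 ->
    exists2 s, s \in S & dist e s x < dist_set e s Y.
Proof.
move=> _ _ _ l2 Hres x Y Y0 xY cY.
have X0 : x |: Y != set0 by apply/set0Pn; exists x; rewrite setU11.
have cX : #|x |: Y| <= l by rewrite cardsU1 xY; lia.
have XY : x |: Y != Y by apply/eqP => E; move: xY; rewrite -E setU11.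
have [s sS Hs] := Hres _ _ X0 Y0 cX (leq_trans cY (leq_subr _ _)) XY.
exists s => //; rewrite ltnNge; apply/negP => Hle; move/eqP: Hs; apply.
have key : forall m, (m <= dist_set e s (x |: Y)) = (m <= dist_set e s Y).
  move=> m; rewrite /dist_set !le_bigmin.
  apply/andP/andP => [[H1 /forall_inP H2]|[H1 /forall_inP H2]]; split => //.
  - apply/forall_inP => i Hi; apply: H2; by rewrite in_setU1 Hi orbT.
  - apply/forall_inP => i; rewrite in_setU1 => /orP[/eqP->|Hi]; last exact: H2.
    apply: leq_trans Hle; rewrite /dist_set le_bigmin H1; exact/forall_inP.
by apply/eqP; rewrite eqn_leq key leqnn -key leqnn.
Qed.
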